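(* Let $m$ be a universal probability and let $R$ be a lower-computable semi-POVM. Then: (i) there exists $c>0$ such that for every unit vector $|\psi\rangle\in\mathbb{C}^N$ and every $s\in\Sigma^*$, $\langle\psi|R(s)|\psi\rangle\le c\,m(s)$; (ii) there exists $c>0$ such that for every density matrix $\rho\in\mathrm{Her}(N)$ and every $s\in\Sigma^*$, $\operatorname{tr}(\rho R(s))\le c\,m(s)$.
   Context: $N$ is a fixed positive integer; $\Sigma^*$ is the set of finite binary strings. $\mathrm{Her}(N)$ is the set of $N\times N$ Hermitian matrices and $\mathrm{Her}_Q(N)$ those with entries in $\{a+ib:a,b\in\mathbb{Q}\}$; $A\leqslant B$ means $B-A$ is positive semi-definite. A density matrix is $\rho\in\mathrm{Her}(N)$, $0\leqslant\rho$, $\operatorname{tr}\rho=1$. A lower-computable semi-measure is a function $r:\Sigma^*\to[0,\infty)$ with $\sum_s r(s)\le 1$ such that there is a total recursive $f:\mathbb{N}\times\Sigma^*\to\mathbb{Q}$ with $\lim_{n}f(n,s)=r(s)$ and $f(n,s)\le f(n+1,s)$ for all $n,s$. A universal probability is a lower-computable semi-measure $m$ such that for every lower-computable semi-measure $r$ there is $c>0$ with $c\,r(s)\le m(s)$ for all $s$. A semi-POVM on $\Sigma^*$ is a map $R:\Sigma^*\to\mathrm{Her}(N)$ with $0\leqslant R(s)$ for all $s$ and $\sum_s R(s)\leqslant I$. A lower-computable semi-POVM is a semi-POVM $R$ for which there is a total recursive $f:\mathbb{N}\times\Sigma^*\to\mathrm{Her}_Q(N)$ with $\lim_{n}f(n,s)=R(s)$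 and $f(n,s)\leqslant R(s)$ for all $n,s$. *)

(* Defs.v *)
From HB Require Import structures.
From mathcomp Require Import all_boot all_order all_algebra.
From mathcomp Require Import reals complex.

Set Implicit Arguments.
Unset Strict Implicit.
Unset Printing Implicit Defensive.

Import Order.TTheory GRing.Theory Num.Theory.
Local Open Scope ring_scope.

Inductive mucode : Type :=
| MZero
| MSucc
| MProj of nat
| MComp of mucode & seq mucode
| MPrimRec of mucode & mucode
| MMu of mucode.

Inductive mueval : mucode -> seq nat -> nat -> Prop :=
| ev_zero xs : mueval MZero xs 0
| ev_succ xs : mueval MSucc xs (nth 0 xs 0).+1
| ev_proj i xs : mueval (MProj i) xs (nth 0 xs i)
| ev_comp f gs xs ys y :
    muevalL gs xs ys -> mueval f ys y -> mueval (MComp f gs) xs y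
| ev_prim0 b st xs y :
    mueval b xs y -> mueval (MPrimRec b st) (0 :: xs) y
| ev_primS b st n xs y z :
    mueval (MPrimRec b st) (n :: xs) y ->
    mueval st (n :: y :: xs) z ->
    mueval (MPrimRec b st) (n.+1 :: xs) z
| ev_mu f xs n :
    mueval f (n :: xs) 0 ->
    (forall k, (k < n)%N -> exists v, mueval f (k :: xs) v.+1) ->
    mueval (MMu f) xs n
with muevalL : seq mucode -> seq nat -> seq nat -> Prop :=
| evL_nil xs : muevalL [::] xs [::]
| evL_cons g gs xs y ys :
    mueval g xs y -> muevalL gs xs ys -> muevalL (g :: gs) xs (y :: ys).

Definition pairN (a b : nat) : nat := (((a + b) * (a + b).+1) %/ 2 + b)%N.

(* Bijective base-2 code of a binary string (first bit least significant). *)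
Definition strcode (s : seq bool) : nat :=
  foldr (fun (b : bool) acc => (acc.*2 + (1 + b))%N) 0%N s.

Fixpoint listcode (l : seq nat) : nat :=
  if l is x :: l' then (pairN x (listcode l')).+1 else 0%N.

Definition repQ (v : nat) (q : rat) : Prop :=
  exists p m d : nat,
    v = pairN (pairN p m) d /\ (0 < d)%N /\ q = (p%:R - m%:R) / d%:R.

Definition total_recursive (A B : Type) (encA : A -> nat)
    (repB : nat -> B -> Prop) (f : A -> B) : Prop :=
  exists e : mucode, forall a, exists v, mueval e [:: encA a] v /\ repB v (f a).

Definition enc_ns (p : nat * seq bool) : nat := pairN p.1 (strcode p.2).

(* Elements of Her_Q(N) (more generally of Q[i]^{N x N}) are given as a pair
   (Re, Im) of rational matrices; a code is the list of the 2 N^2 rational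
   codes of the entries (real parts first, row-major). *)
Definition repQMx (N : nat) (v : nat) (A : 'M[rat]_N * 'M[rat]_N) : Prop :=
  exists vs : seq nat, v = listcode vs /\ size vs = (2 * (N * N))%N /\
    forall i j : 'I_N, repQ (nth 0%N vs (i * N + j)) (A.1 i j) /\
                       repQ (nth 0%N vs (N * N + (i * N + j))) (A.2 i j).

Definition seq_cvg (K : numFieldType) (u : nat -> K) (l : K) : Prop :=
  forall e : K, 0 < e -> exists n0, forall n, (n0 <= n)%N -> `|u n - l| < e.

Section MatrixDefs.
Variable C : numClosedFieldType.

Definition adjmx (m n : nat) (A : 'M[C]_(m, n)) : 'M[C]_(n, m) :=
  (map_mx Num.conj A)^T.

Definition hermitian (N : nat) (A : 'M[C]_N) : Prop := adjmx A = A.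

Definition psd (N : nat) (A : 'M[C]_N) : Prop :=
  hermitian A /\ forall v : 'cV[C]_N, 0 <= (adjmx v *m A *m v) 0 0.

Definition loewner (N : nat) (A B : 'M[C]_N) : Prop := psd (B - A).

Definition density_matrix (N : nat) (rho : 'M[C]_N) : Prop :=
  psd rho /\ \tr rho = 1.

Definition unit_vector (N : nat) (psi : 'cV[C]_N) : Prop :=
  (adjmx psi *m psi) 0 0 = 1.
End MatrixDefs.

(* sum_s r(s) <= 1 for nonnegative r : every finite partial sum is <= 1 *)
Definition semi_measure (R : realType) (r : seq bool -> R) : Prop :=
  (forall s, 0 <= r s) /\
  (forall l : seq (seq bool), uniq l -> \sum_(s <- l) r s <= 1).

Definition lower_computable_semi_measure (R : realType) (r : seq bool -> R)
    : Prop :=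
  semi_measure r /\
  exists f : nat -> seq bool -> rat,
    total_recursive enc_ns repQ (fun p => f p.1 p.2) /\
    (forall n s, f n s <= f n.+1 s) /\
    (forall s, seq_cvg (fun n => ratr (f n s) : R) (r s)).

Definition universal_probability (R : realType) (m : seq bool -> R) : Prop :=
  lower_computable_semi_measure m /\
  forall r : seq bool -> R, lower_computable_semi_measure r ->
    exists c : R, 0 < c /\ forall s, c * r s <= m s.

Definition embedQMx (R : realType) (N : nat) (A : 'M[rat]_N * 'M[rat]_N)
    : 'M[(R : rcfType)[i]]_N :=
  map_mx (fun q => (ratr q : R)%:C%C) A.1 +
  map_mx (fun q => ('i * (ratr q : R)%:C)%C) A.2.

(* semi-POVM: 0 <= R(s) and sum_s R(s) <= I (every finite partial sum) *)
Definition semi_POVM (R : realType) (N : nat)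
    (P : seq bool -> 'M[(R : rcfType)[i]]_N) : Prop :=
  (forall s, psd (P s)) /\
  (forall l : seq (seq bool), uniq l -> loewner (\sum_(s <- l) P s) 1%:M).

Definition lower_computable_semi_POVM (R : realType) (N : nat)
    (P : seq bool -> 'M[(R : rcfType)[i]]_N) : Prop :=
  semi_POVM P /\
  exists f : nat -> seq bool -> 'M[rat]_N * 'M[rat]_N,
    total_recursive enc_ns (@repQMx N) (fun p => f p.1 p.2) /\
    (forall n s, loewner (embedQMx R (f n s)) (P s)) /\
    (forall s (i j : 'I_N),
        seq_cvg (fun n => embedQMx R (f n s) i j) (P s i j)).

(* Main.v *)
Require Import Defs.
From HB Require Import structures.
From mathcomp Require Import all_boot all_order all_algebra.
From mathcomp Require Import reals complex.
From mathcomp Require Import zify ring lra.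
Import Order.TTheory GRing.Theory Num.Theory.

Section Mu.
Local Open Scope nat_scope.

Lemma ev_conv P xs v w : mueval P xs v -> v = w -> mueval P xs w.
Proof. by move=> h <-. Qed.
Lemma ev_proj' i xs v : v = nth 0 xs i -> mueval (MProj i) xs v.
Proof. move=> ->; exact: ev_proj. Qed.
Lemma ev_zero' xs v : v = 0 -> mueval MZero xs v.
Proof. move=> ->; exact: ev_zero. Qed.
Lemma ev_succ' xs v : v = (nth 0 xs 0).+1 -> mueval MSucc xs v.
Proof. move=> ->; exact: ev_succ. Qed.

Definition addP := MPrimRec (MProj 0) (MComp MSucc [:: MProj 1]).
Lemma addP_ev n y xs v : v = n + y -> mueval addP (n :: y :: xs) v.
Proof.
move=> ->; elim: n => [|n IH]; first by rewrite add0n; apply: ev_prim0; exact: ev_proj'.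
apply: ev_primS IH _.
apply: (ev_comp (ys := [:: n + y])); first by apply: evL_cons; [exact: ev_proj' | exact: evL_nil].
exact: ev_succ'.
Qed.

Definition mulP := MPrimRec MZero (MComp addP [:: MProj 2; MProj 1]).
Lemma mulP_ev n y xs v : v = n * y -> mueval mulP (n :: y :: xs) v.
Proof.
move=> ->; elim: n => [|n IH]; first by apply: ev_prim0; exact: ev_zero'.
apply: ev_primS IH _.
apply: (ev_comp (ys := [:: y; n * y])).
  by apply: evL_cons; [exact: ev_proj'|apply: evL_cons; [exact: ev_proj'|exact: evL_nil]].
by apply: addP_ev; rewrite mulSn.
Qed.

Definition predP := MPrimRec MZero (MProj 0).
Lemma predP_ev n xs v : v = n.-1 -> mueval predP (n :: xs) v.
Proof.
move=> ->; elim: n => [|n IH]; first by apply: ev_prim0; exact: ev_zero'.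
by apply: ev_primS IH _; exact: ev_proj'.
Qed.

Definition subP := MPrimRec (MProj 0) (MComp predP [:: MProj 1]).
Lemma subP_ev y x xs v : v = x - y -> mueval subP (y :: x :: xs) v.
Proof.
move=> ->; elim: y => [|y IH]; first by rewrite subn0; apply: ev_prim0; exact: ev_proj'.
apply: ev_primS IH _.
apply: (ev_comp (ys := [:: x - y])); first by apply: evL_cons; [exact: ev_proj' | exact: evL_nil].
by apply: predP_ev; rewrite subnS.
Qed.

Ltac simpl_refl := match goal with |- _ = ?e => let e' := eval cbv [nth] in e in exact (erefl e') end.
Ltac mu_hint P := fail.
Ltac mu := lazymatch goal with
 | |- muevalL [::] _ _ => eapply evL_nil
 | |- muevalL (_ :: _) _ _ => eapply evL_cons; [mu | mu]
 | |- mueval (MComp _ _) _ _ => eapply ev_comp; [mu | mu]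
 | |- mueval (MProj _) _ _ => eapply ev_proj'; simpl_refl
 | |- mueval MZero _ _ => eapply ev_zero'; reflexivity
 | |- mueval MSucc _ _ => eapply ev_succ'; simpl_refl
 | |- mueval ?P _ _ => mu_hint P
end.
Ltac mu_hint P ::= match P with
 | addP => eapply addP_ev; simpl_refl
 | mulP => eapply mulP_ev; simpl_refl
 | predP => eapply predP_ev; simpl_refl
 | subP => eapply subP_ev; simpl_refl
 end.

Fixpoint tri n := if n is n'.+1 then tri n' + n else 0.
Definition triP := MPrimRec MZero (MComp addP [:: MProj 1; MComp MSucc [:: MProj 0]]).
Lemma triP_ev n xs v : v = tri n -> mueval triP (n :: xs) v.
Proof.
move=> ->; elim: n => [|n IH]; first by apply: ev_prim0; exact: ev_zero'.
apply: ev_primS IH _.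
eapply ev_conv; first mu.
by [].
Qed.
Ltac mu_hint P ::= match P with
 | addP => eapply addP_ev; simpl_refl
 | mulP => eapply mulP_ev; simpl_refl
 | predP => eapply predP_ev; simpl_refl
 | subP => eapply subP_ev; simpl_refl
 | triP => eapply triP_ev; simpl_refl
 end.

Lemma tri2 n : tri n * 2 = n * n.+1.
Proof. elim: n => [|n IH] //=. rewrite mulnDl IH. lia. Qed.

Lemma pairNE a b : pairN a b = tri (a + b) + b.
Proof. by rewrite /pairN -tri2 mulnK. Qed.

Lemma tri_mono m n : m <= n -> tri m <= tri n.
Proof. elim: n => [|n IH]; first by rewrite leqn0 => /eqP ->.
rewrite leq_eqVlt => /orP [/eqP -> //| /IH h] /=. lia. Qed.

Definition pairP := MComp addP [:: MComp triP [:: addP]; MProj 1].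
Lemma pairP_ev a b xs v : v = pairN a b -> mueval pairP (a :: b :: xs) v.
Proof. move=> ->; rewrite /pairP; eapply ev_conv; first mu. by rewrite pairNE. Qed.

(* g (k :: z :: _) = z.+1 - tri k.+1 *)
Definition gP := MComp subP [:: MComp triP [:: MComp MSucc [:: MProj 0]]; MComp MSucc [:: MProj 1]].
Definition wP := MMu gP.
Lemma wP_ev a b xs v : v = a + b -> mueval wP (pairN a b :: xs) v.
Proof.
move=> ->; apply: ev_mu; rewrite /gP.
  eapply ev_conv; first mu.
  rewrite pairNE /=; apply/eqP; rewrite subn_eq0. lia.
move=> k hk; exists ((pairN a b).+1 - tri k.+1).-1.
eapply ev_conv; first mu.
rewrite prednK // subn_gt0 ltnS pairNE.
have := @tri_mono k.+1 (a + b) hk; lia.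
Qed.

Definition sndP := MComp subP [:: MComp triP [:: wP]; MProj 0].
Definition fstP := MComp subP [:: sndP; wP].
Ltac mu_hint P ::= match P with
 | addP => eapply addP_ev; simpl_refl
 | mulP => eapply mulP_ev; simpl_refl
 | predP => eapply predP_ev; simpl_refl
 | subP => eapply subP_ev; simpl_refl
 | triP => eapply triP_ev; simpl_refl
 | wP => eapply wP_ev; simpl_refl
 | pairP => eapply pairP_ev; simpl_refl
 end.
Lemma sndP_ev a b xs v : v = b -> mueval sndP (pairN a b :: xs) v.
Proof. move=> ->; rewrite /sndP; eapply ev_conv; first mu. rewrite pairNE; lia. Qed.
Lemma fstP_ev a b xs v : v = a -> mueval fstP (pairN a b :: xs) v.
Proof. move=> ->; rewrite /fstP /sndP; eapply ev_conv; first mu. rewrite pairNE; lia. Qed.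

Ltac mu_hint P ::= match P with
 | addP => eapply addP_ev; simpl_refl
 | mulP => eapply mulP_ev; simpl_refl
 | predP => eapply predP_ev; simpl_refl
 | subP => eapply subP_ev; simpl_refl
 | triP => eapply triP_ev; simpl_refl
 | wP => eapply wP_ev; simpl_refl
 | pairP => eapply pairP_ev; simpl_refl
 | fstP => eapply fstP_ev; simpl_refl
 | sndP => eapply sndP_ev; simpl_refl
 end.

Definition tailP := MComp sndP [:: MComp predP [:: MProj 0]].
Definition headP := MComp fstP [:: MComp predP [:: MProj 0]].
Lemma tailP_ev x l xs v : v = listcode l -> mueval tailP (listcode (x :: l) :: xs) v.
Proof.
move=> ->; apply: (ev_comp (ys := [:: pairN x (listcode l)])); last exact: sndP_ev.
apply: evL_cons; last exact: evL_nil.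
apply: (ev_comp (ys := [:: listcode (x :: l)])); last exact: predP_ev.
by apply: evL_cons; [exact: ev_proj'|exact: evL_nil].
Qed.
Lemma headP_ev x l xs v : v = x -> mueval headP (listcode (x :: l) :: xs) v.
Proof.
move=> ->; apply: (ev_comp (ys := [:: pairN x (listcode l)])); last exact: fstP_ev.
apply: evL_cons; last exact: evL_nil.
apply: (ev_comp (ys := [:: listcode (x :: l)])); last exact: predP_ev.
by apply: evL_cons; [exact: ev_proj'|exact: evL_nil].
Qed.

Fixpoint tailsP j := if j is j'.+1 then MComp (tailsP j') [:: tailP] else MProj 0.
Lemma tailsP_ev j vs xs : j <= size vs -> mueval (tailsP j) (listcode vs :: xs) (listcode (drop j vs)).
Proof.
elim: j vs xs => [|j IH] vs xs hj /=; first by rewrite drop0; exact: ev_proj'.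
case: vs hj => [//|x l] /= hj.
apply: (ev_comp (ys := [:: listcode l])); last exact: IH.
by apply: evL_cons; [exact: tailP_ev|exact: evL_nil].
Qed.
Definition nthP j := MComp headP [:: tailsP j].
Lemma nthP_ev j vs xs : j < size vs -> mueval (nthP j) (listcode vs :: xs) (nth 0 vs j).
Proof.
move=> hj; apply: (ev_comp (ys := [:: listcode (drop j vs)])).
  by apply: evL_cons; [apply: tailsP_ev; exact: ltnW|exact: evL_nil].
rewrite (drop_nth 0 hj); exact: headP_ev.
Qed.

Definition P1 := MComp fstP [:: MComp fstP [:: MProj 0]].
Definition M1 := MComp sndP [:: MComp fstP [:: MProj 0]].
Definition D1 := MComp sndP [:: MProj 0].
Definition P2 := MComp fstP [:: MComp fstP [:: MProj 1]].
Definition M2 := MComp sndP [:: MComp fstP [:: MProj 1]].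
Definition D2 := MComp sndP [:: MProj 1].
Definition add2 g h := MComp addP [:: g; h].
Definition mul2 g h := MComp mulP [:: g; h].
Definition sub2 g h := MComp subP [:: h; g].
Definition tP := sub2 (add2 (mul2 P1 D2) (mul2 M2 D1)) (add2 (mul2 P2 D1) (mul2 M1 D2)).
Definition one_minus g := sub2 (MComp MSucc [:: MZero]) g.
Definition maxP := add2 (mul2 (MProj 1) (one_minus tP)) (mul2 (MProj 0) (one_minus (one_minus tP))).

Lemma maxP_ev p1 m1 d1 p2 m2 d2 xs :
  let v1 := pairN (pairN p1 m1) d1 in let v2 := pairN (pairN p2 m2) d2 in
  mueval maxP (v1 :: v2 :: xs)
    (if p1 * d2 + m2 * d1 <= p2 * d1 + m1 * d2 then v2 else v1).
Proof.
move=> v1 v2; rewrite /maxP /add2 /mul2 /one_minus /sub2 /tP /add2 /mul2 /sub2 /P1 /P2 /M1 /M2 /D1 /D2.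
eapply ev_conv; first mu.
case: leqP => h.
  have -> : p1 * d2 + m2 * d1 - (p2 * d1 + m1 * d2) = 0 by apply/eqP; rewrite subn_eq0.
  by rewrite subn0 subnn muln1 muln0 addn0.
have -> : 1 - (p1 * d2 + m2 * d1 - (p2 * d1 + m1 * d2)) = 0 by apply/eqP; rewrite subn_eq0 subn_gt0.
by rewrite subn0 muln0 muln1 add0n.
Qed.
End Mu.

Local Open Scope ring_scope.
Lemma ratle_key (p1 m1 d1 p2 m2 d2 : nat) : (0 < d1)%N -> (0 < d2)%N ->
  ((p1%:R - m1%:R) / d1%:R <= (p2%:R - m2%:R) / d2%:R :> rat) =
  (p1 * d2 + m2 * d1 <= p2 * d1 + m1 * d2)%N.
Proof.
move=> h1 h2.
have hd : (0 < (d1 * d2)%:R :> rat) by rewrite ltr0n muln_gt0 h1.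
rewrite -(ler_pM2r hd) -(ler_nat rat) !natrD !natrM.
have n1 : d1%:R != 0 :> rat by rewrite pnatr_eq0 -lt0n.
have n2 : d2%:R != 0 :> rat by rewrite pnatr_eq0 -lt0n.
rewrite -[LHS]subr_ge0 -[RHS]subr_ge0; congr (_ <= _); field.
by rewrite n1 n2.
Qed.

Lemma repQ_max v1 v2 q1 q2 xs : repQ v1 q1 -> repQ v2 q2 ->
  exists w, mueval maxP (v1 :: v2 :: xs) w /\ repQ w (Num.max q1 q2).
Proof.
move=> [p1 [m1 [d1 [-> [h1 ->]]]]] [p2 [m2 [d2 [-> [h2 ->]]]]].
eexists; split; first exact: maxP_ev.
rewrite maxEle ratle_key //.
case: ifP => _; [exists p2, m2, d2 | exists p1, m1, d1]; by [].
Qed.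

Section Prog.
Variables (N : nat) (f : nat -> seq bool -> 'M[rat]_N * 'M[rat]_N) (e : mucode).
Hypothesis he : forall a, exists v, mueval e [:: enc_ns a] v /\ repQMx v (f a.1 a.2).
Variable i : 'I_N.

Definition aq k s := (f k s).1 i i.
Fixpoint fmax n s := if n is n'.+1 then Num.max (fmax n' s) (aq n s) else aq 0 s.

Definition EP := MComp (nthP (i * N + i)) [:: MComp e [:: pairP]].
Lemma EP_ev k s xs : exists w, mueval EP (k :: strcode s :: xs) w /\ repQ w (aq k s).
Proof.
have [v [hv [vs [hvs [hsz hr]]]]] := he (k, s).
exists (nth 0%N vs (i * N + i)); split; last exact: (hr i i).1.
apply: (ev_comp (ys := [:: v])).
  apply: evL_cons; last exact: evL_nil.
  apply: (ev_comp (ys := [:: pairN k (strcode s)])); last exact: hv.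
  by apply: evL_cons; [exact: pairP_ev|exact: evL_nil].
rewrite hvs; apply: nthP_ev; rewrite hsz.
have := ltn_ord i; nia.
Qed.

Definition MP := MPrimRec (MComp EP [:: MZero; MProj 0])
  (MComp maxP [:: MProj 1; MComp EP [:: MComp MSucc [:: MProj 0]; MProj 2]]).
Lemma MP_ev n s xs : exists w, mueval MP (n :: strcode s :: xs) w /\ repQ w (fmax n s).
Proof.
elim: n => [|n [w [hw hr]]].
  have [w [hw hr]] := EP_ev 0 s [::].
  exists w; split => //; apply: ev_prim0.
  apply: (ev_comp (ys := [:: 0%N; strcode s])) => //.
  by apply: evL_cons; [exact: ev_zero|apply: evL_cons; [exact: ev_proj'|exact: evL_nil]].
have [w' [hw' hr']] := EP_ev n.+1 s [::].
have [u [hu hru]] := @repQ_max _ _ _ _ [::] hr hr'.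
exists u; split => //; apply: ev_primS hw _.
apply: (ev_comp (ys := [:: w; w'])) => //.
apply: evL_cons; first exact: ev_proj'.
apply: evL_cons; last exact: evL_nil.
apply: (ev_comp (ys := [:: n.+1; strcode s])) => //.
apply: evL_cons; last by apply: evL_cons; [exact: ev_proj'|exact: evL_nil].
apply: (ev_comp (ys := [:: n])); last exact: ev_succ'.
by apply: evL_cons; [exact: ev_proj'|exact: evL_nil].
Qed.

Lemma fmax_rec : total_recursive enc_ns repQ (fun p => fmax p.1 p.2).
Proof.
exists (MComp MP [:: fstP; sndP]) => -[n s] /=.
have [w [hw hr]] := MP_ev n s [::].
exists w; split => //.
apply: (ev_comp (ys := [:: n; strcode s])) => //.
apply: evL_cons; first exact: fstP_ev.
by apply: evL_cons; [exact: sndP_ev|exact: evL_nil].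
Qed.
End Prog.
Set Implicit Arguments. Unset Strict Implicit.
Section Gen.
Variable C : numClosedFieldType.
Variable N : nat.
Implicit Types A : 'M[C]_N.

Definition ev (i : 'I_N) : 'cV[C]_N := delta_mx i 0.

Lemma adjmxD (u v : 'cV[C]_N) : adjmx (u + v) = adjmx u + adjmx v.
Proof. by rewrite /adjmx map_mxD linearD. Qed.
Lemma adjmxZ (x : C) (u : 'cV[C]_N) : adjmx (x *: u) = x^* *: adjmx u.
Proof. by rewrite /adjmx map_mxZ linearZ. Qed.
Lemma adjmx_ev i : adjmx (ev i) = delta_mx 0 i.
Proof.
rewrite /adjmx /ev; apply/matrixP => a b; rewrite !mxE.
by rewrite andbC conjC_nat.
Qed.
Lemma quad_ev A i j : (adjmx (ev i) *m A *m ev j) 0 0 = A i j.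
Proof. by rewrite adjmx_ev -rowE /ev -colE !mxE. Qed.

Definition bil A (u v : 'cV[C]_N) := (adjmx u *m A *m v) 0 0.
Lemma quad2 A i j x y : bil A (x *: ev i + y *: ev j) (x *: ev i + y *: ev j) =
  x^* * x * A i i + x^* * y * A i j + y^* * x * A j i + y^* * y * A j j.
Proof.
rewrite /bil adjmxD !adjmxZ !mulmxDl !mulmxDr -!scalemxAl -!scalemxAr !mxE.
have q a b : \sum_j0 (adjmx (ev a) *m A) 0 j0 * ev b j0 0 = A a b by rewrite -quad_ev mxE.
rewrite !q.
ring.
Qed.

Lemma psd_diag A i : psd A -> 0 <= A i i.
Proof. by move=> [_ h]; have := h (ev i); rewrite quad_ev. Qed.

Lemma herm_entry A i j : Defs.hermitian A -> (A i j)^* = A j i.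
Proof. by move=> h; rewrite -{2}h /adjmx !mxE. Qed.

Lemma psd_off A i j : psd A -> `|A i j| <= A i i + A j j.
Proof.
move=> hA; have hii := psd_diag i hA; have hjj := psd_diag j hA.
set z := A i j; set nz := `|z|.
have [z0|zn0] := eqVneq z 0.
  by rewrite /nz z0 normr0 addr_ge0.
have nzp : 0 < nz by rewrite normr_gt0.
have hz : z * z^* = nz ^+ 2 by rewrite /nz normCK.
have hji : A j i = z^* by rewrite /z herm_entry //; case: hA.
have := hA.2 (nz *: ev i + (- z^*) *: ev j).
rewrite -/(bil A _ _) quad2 /nz conj_normC. rewrite !rmorphN /= conjCK hji -/z -/nz.
have -> : nz * nz * A i i + nz * - z^* * z + - z * nz * z^* + - z * - z^* * A j j =
   nz ^+ 2 * (A i i + A j j - 2 * nz) + (z * z^* - nz ^+ 2) * (A j j - 2 * nz) by ring.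
rewrite hz subrr mul0r addr0 pmulr_rge0 ?exprn_gt0 // subr_ge0 => h.
apply: le_trans h; rewrite mulr2n mulrDl mul1r lerDl; exact: ltW.
Qed.

Lemma psd_tr A i : psd A -> A i i <= \tr A.
Proof.
move=> hA; rewrite /mxtrace (bigD1 i) //= lerDl.
by apply: sumr_ge0 => k _; exact: psd_diag.
Qed.

Lemma psd_off2 A i j : psd A -> `|A i j| <= \tr A *+ 2.
Proof.
move=> hA; apply: le_trans (psd_off i j hA) _.
by rewrite mulr2n lerD // psd_tr.
Qed.

Lemma quadE A (v : 'cV[C]_N) :
  (adjmx v *m A *m v) 0 0 = \sum_b (\sum_a (v a 0)^* * A a b) * v b 0.
Proof. rewrite !mxE; apply: eq_bigr => b _; rewrite !mxE; congr (_ * _).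
by apply: eq_bigr => a _; rewrite !mxE. Qed.

Lemma unit_le1 (psi : 'cV[C]_N) k : unit_vector psi -> `|psi k 0| <= 1.
Proof.
rewrite /unit_vector !mxE => h.
have h' : \sum_a `|psi a 0| ^+ 2 = 1.
  by rewrite -h; apply: eq_bigr => a _; rewrite normCKC !mxE.
rewrite -(@expr_le1 _ 2) // -h' (bigD1 k) //= lerDl.
by apply: sumr_ge0 => a _; exact: exprn_ge0.
Qed.

Lemma thm_i A (psi : 'cV[C]_N) : psd A -> unit_vector psi ->
  (adjmx psi *m A *m psi) 0 0 <= \tr A *+ 2 *+ N *+ N.
Proof.
move=> hA hpsi.
have h0 : 0 <= (adjmx psi *m A *m psi) 0 0 by exact: hA.2.
rewrite -(ger0_norm h0) quadE.
apply: le_trans (ler_norm_sum _ _ _) _.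
have -> : \tr A *+ 2 *+ N *+ N = \sum_(b < N) \sum_(a < N) \tr A *+ 2.
  by rewrite !sumr_const card_ord.
apply: ler_sum => b _; rewrite normrM.
rewrite -[X in _ <= X]mulr1; apply: ler_pM => //.
- apply: le_trans (ler_norm_sum _ _ _) _.
  apply: ler_sum => a _; rewrite normrM norm_conjC.
  rewrite -[X in _ <= X]mul1r; apply: ler_pM => //; first exact: unit_le1.
  exact: psd_off2.
- exact: unit_le1.
Qed.


Lemma thm_ii A rho : psd A -> density_matrix rho ->
  \tr (rho *m A) <= \tr A *+ 2 *+ 2 *+ N *+ N.
Proof.
move=> hA [hr tr1].
have trE : \tr (rho *m A) = \sum_i \sum_j rho i j * A j i.
  by rewrite /mxtrace; apply: eq_bigr => i _; rewrite mxE.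
have hA' := hA.1; have hr' := hr.1.
have hreal : \tr (rho *m A) \is Num.real.
  apply/CrealP; rewrite trE rmorph_sum /=.
  rewrite exchange_big /=; apply: eq_bigr => i _; rewrite rmorph_sum /=.
  apply: eq_bigr => j _; rewrite rmorphM /=.
  by rewrite (herm_entry i j hr') (herm_entry j i hA').
apply: le_trans (real_ler_norm hreal) _; rewrite trE.
apply: le_trans (ler_norm_sum _ _ _) _.
have -> : \tr A *+ 2 *+ 2 *+ N *+ N = \sum_(i < N) \sum_(j < N) \tr A *+ 2 *+ 2.
  by rewrite !sumr_const card_ord.
apply: ler_sum => i _; apply: le_trans (ler_norm_sum _ _ _) _.
apply: ler_sum => j _; rewrite normrM.
have h1 : `|rho i j| <= 2%:R by rewrite -tr1; exact: psd_off2.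
apply: le_trans (ler_pM _ _ h1 (psd_off2 j i hA)) _ => //.
by rewrite mulr_natl.
Qed.
End Gen.

Section Main.
Variables (R : realType) (N : nat) (P : seq bool -> 'M[(R : rcfType)[i]]_N).
Hypothesis hpsd : forall s, psd (P s).

Definition rr (j : 'I_N) s : R := complex.Re (P s j j).
Lemma rrE j s : (rr j s)%:C%C = P s j j.
Proof. apply: RRe_real; apply: ger0_real; exact: psd_diag. Qed.
Lemma rr_ge0 j s : 0 <= rr j s.
Proof. by rewrite -(lecR 0) rrE; exact: psd_diag. Qed.

Lemma rr_sum j l : uniq l -> (forall l, uniq l -> loewner (\sum_(s <- l) P s) 1%:M) ->
  \sum_(s <- l) rr j s <= 1.
Proof.
move=> hl hs; rewrite -lecR rmorph_sum rmorph1 /=.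
under eq_bigr do rewrite rrE.
have := psd_diag j (hs l hl); rewrite mxE [X in _ + X]mxE summxE mxE eqxx mulr1n subr_ge0 //.
Qed.

Variable f : nat -> seq bool -> 'M[rat]_N * 'M[rat]_N.
Hypothesis hle : forall n s, loewner (embedQMx R (f n s)) (P s).
Hypothesis hcv : forall s (i j : 'I_N),
        seq_cvg (fun n => embedQMx R (f n s) i j) (P s i j).
Variable j : 'I_N.

Lemma embed_diag n s : embedQMx R (f n s) j j = (ratr (aq N f j n s))%:C%C /\
   ratr (aq N f j n s) <= rr j s.
Proof.
have := psd_diag j (hle n s).
rewrite !mxE -rrE /aq lecE /=; simpc => /andP [/eqP hb ha].
have hb0 : ratr ((f n s).2 j j) = 0 :> R by apply/eqP; rewrite -oppr_eq0 hb.
split; last by rewrite -subr_ge0.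
by rewrite hb0.
Qed.

Lemma fmax_ex n s : exists k, fmax N f j n s = aq N f j k s.
Proof.
elim: n => [|n [k hk]] /=; first by exists 0%N.
rewrite maxEle; case: ifP => _; [by exists n.+1 | by rewrite hk; exists k].
Qed.

Lemma fmax_ge n s : aq N f j n s <= fmax N f j n s.
Proof. case: n => [|n] //=; by rewrite le_max lexx orbT. Qed.

Lemma normC_R (x : R) : `|x%:C%C| = (`|x|)%:C%C.
Proof. by rewrite normc_def /= expr0n addr0 sqrtr_sqr. Qed.

Lemma fmax_cvg s : seq_cvg (fun n => ratr (fmax N f j n s) : R) (rr j s).
Proof.
move=> e he.
have he' : ((0:R)%:C%C : (R : rcfType)[i]) < e%:C%C by rewrite ltcR.
have [n0 hn0] := hcv s j j he'.
exists n0 => n hn; have := hn0 n hn.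
have [hd hdl] := embed_diag n s; rewrite hd -rrE -rmorphB normC_R ltcR => h.
have [k hk] := fmax_ex n s.
have h1 : ratr (fmax N f j n s) <= rr j s by rewrite hk; exact: (embed_diag k s).2.
have h2 : ratr (aq N f j n s) <= ratr (fmax N f j n s) :> R by rewrite ler_rat fmax_ge.
rewrite ler0_norm ?subr_le0 // ; rewrite ler0_norm ?subr_le0 // in h; lra.
Qed.

Lemma rr_lcsm e (he : forall a, exists v, mueval e [:: enc_ns a] v /\ repQMx v (f a.1 a.2))
  (hs : forall l, uniq l -> loewner (\sum_(s <- l) P s) 1%:M) :
  lower_computable_semi_measure (rr j).
Proof.
split; first by split; [exact: rr_ge0 | move=> l hl; exact: rr_sum].
exists (fmax N f j); split; first exact: (fmax_rec N f e he j).
split; last exact: fmax_cvg.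
by move=> n s /=; rewrite le_max lexx.
Qed.
End Main.

Theorem mainTheorem5 (R : realType) (N : nat) (hN : (0 < N)%N)
    (m : seq bool -> R) (P : seq bool -> 'M[(R : rcfType)[i]]_N) :
  universal_probability m -> lower_computable_semi_POVM P ->
  (exists c : R, 0 < c /\
     forall (psi : 'cV[(R : rcfType)[i]]_N) (s : seq bool),
       unit_vector psi ->
       (adjmx psi *m P s *m psi) 0 0 <= (c * m s)%:C%C) /\
  (exists c : R, 0 < c /\
     forall (rho : 'M[(R : rcfType)[i]]_N) (s : seq bool),
       density_matrix rho ->
       \tr (rho *m P s) <= (c * m s)%:C%C).
Proof.
move=> [_ hm] [[hpsd hs] [f [[e he] [hle hcv]]]].
have hc : forall j : 'I_N, exists c : R, 0 < c /\ forall s, c * rr P j s <= m s.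
  move=> j; apply: hm; exact: (rr_lcsm hpsd hle hcv j he hs).
have [c hc'] := fin_all_exists hc.
set S := \sum_(j < N) (c j)^-1.
have Spos : 0 < S.
  rewrite /S (bigD1 (Ordinal hN)) //=.
  have h0 : 0 < (c (Ordinal hN))^-1 by rewrite invr_gt0 (hc' _).1.
  apply: (lt_le_trans h0); rewrite lerDl.
  by apply: sumr_ge0 => k _; rewrite invr_ge0 ltW // (hc' k).1.
have htr : forall s, \tr (P s) <= (S * m s)%:C%C.
  move=> s; rewrite /mxtrace.
  under eq_bigr do rewrite -(rrE hpsd).
  rewrite -rmorph_sum lecR /S mulr_suml.
  apply: ler_sum => k _; rewrite ler_pdivlMl ?(hc' k).1 //; exact: (hc' k).2.
split.
  exists (S *+ 2 *+ N *+ N); split; first by rewrite !pmulrn_lgt0.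
  move=> psi s hpsi; apply: le_trans (thm_i (hpsd s) hpsi) _.
  rewrite !mulrnAl !rmorphMn; do 3 apply: ler_wMn2r; exact: htr.
exists (S *+ 2 *+ 2 *+ N *+ N); split; first by rewrite !pmulrn_lgt0.
move=> rho s hrho; apply: le_trans (thm_ii (hpsd s) hrho) _.
rewrite !mulrnAl !rmorphMn; do 4 apply: ler_wMn2r; exact: htr.
Qed.
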